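(* Let $q\in(0,1)$ and let $\alpha,p\ge0$ be integers. For every integer $t$ with $0\le t\le p$, $$\sum_{M\in M^{(\alpha)}_{p,0}(t)}q^{\mathrm{cr}(M)}=\begin{bmatrix} p+\alpha\\ t\end{bmatrix}_q\begin{bmatrix} p\\ t\end{bmatrix}_q[t]_q!.$$
   Context: $[n]_q=\frac{1-q^n}{1-q}$, $[n]_q!=\prod_{m=1}^n[m]_q$, $\begin{bmatrix} n\\ m\end{bmatrix}_q=\frac{[n]_q!}{[m]_q![n-m]_q!}$ ($=0$ if $m>n$). Bipartite matchings: for integers $n,j,\alpha\ge0$, let $T_-=\{-\alpha-j,\dots,-1\}$, $T_+=\{1,\dots,n\}$ (top row), $B_-=\{-\tilde j,\dots,-\tilde 1\}$, $B_+=\{\tilde1,\dots,\tilde n\}$ (bottom row; $\tilde m$ is a formal copy of the integer $m$, bottom vertices compared via these integers). A bipartite matching is a set partition of $T_-\cup T_+\cup B_-\cup B_+$ into singletons (isolated vertices) and blocks $\{a,\tilde b\}$ with $a$ top, $\tilde b$ bottom (edges, written $(a,\tilde b)$). $M^{(\alpha)}_{n,j}$ is the set of such matchings with no edge between $T_-$ and $B_-$; $M^{(\alpha)}_{n,j}(l)$ its subset with exactly $l$ edges. The crossing number $\mathrm{cr}(M)$ is the total number of: (C1) unordered pairs of edges $(a,\tilde b),(c,\tilde d)$ with $a<c$ and $d<b$; (C2) pairs of an edge $(a,\tilde b)$ and an isolated top vertex $c$ with $c<a$; (C3) pairs of an edge $(a,\tilde b)$ and an isolated bottom vertex $\tilde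 d$ with $d<b$. *)

(* Defs.v *)
From HB Require Import structures.
From mathcomp Require Import all_boot all_order all_algebra.
Set Implicit Arguments. Unset Strict Implicit. Unset Printing Implicit Defensive.
Import Order.TTheory GRing.Theory Num.Theory.
Local Open Scope ring_scope.

Definition qint {R : fieldType} (q : R) (n : nat) : R := (1 - q ^+ n) / (1 - q).
Definition qfact {R : fieldType} (q : R) (n : nat) : R :=
  \prod_(1 <= m < n.+1) qint q m.
Definition qbinom {R : fieldType} (q : R) (n m : nat) : R :=
  if (m <= n)%N then qfact q n / (qfact q m * qfact q (n - m)) else 0.

(* Top row T_- ∪ T_+ = {-alpha-j,...,-1} ∪ {1,...,n} is encoded, in increasing
   order, by 'I_(alpha + j + n): index i encodes -alpha-j+i if i < alpha+j,
   and i - (alpha+j) + 1 otherwise.  So T_- = indices < alpha + j.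
   Bottom row B_- ∪ B_+ = {-~j,...,-~1} ∪ {~1,...,~n} is encoded, in
   increasing order, by 'I_(j + n); B_- = indices < j.
   A bipartite matching is encoded by the function sending each bottom
   vertex to its top partner (Some a) or to None if it is isolated; it must be
   injective on matched vertices.  A top vertex is isolated iff it is not in
   the image. *)
Definition matching (alpha n j : nat) :=
  {ffun 'I_(j + n) -> option 'I_(alpha + j + n)}.

Definition is_bip_matching (alpha n j : nat) (f : matching alpha n j) : bool :=
  [forall b1, forall b2, (f b1 != None) ==> (f b1 == f b2) ==> (b1 == b2)].

Definition no_neg_edge (alpha n j : nat) (f : matching alpha n j) : bool :=
  [forall b, forall a, (f b == Some a) ==> ~~ ((b < j)%N && (a < alpha + j)%N)].

Definition in_M (alpha n j : nat) (f : matching alpha n j) : bool :=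
  is_bip_matching f && no_neg_edge f.

Definition nedges (alpha n j : nat) (f : matching alpha n j) : nat :=
  #|[set b | f b != None]|.

Definition top_isolated (alpha n j : nat) (f : matching alpha n j)
  (c : 'I_(alpha + j + n)) : bool := [forall b, f b != Some c].

Definition cr (alpha n j : nat) (f : matching alpha n j) : nat :=
  (* (C1): pairs of edges (a,~b), (c,~d) with a < c and d < b;
     each unordered pair is counted once since a < c fixes the order *)
  #|[set bd : 'I_(j + n) * 'I_(j + n) |
      [exists a, exists c, [&& f bd.1 == Some a, f bd.2 == Some c,
                              (a < c)%N & (bd.2 < bd.1)%N]]]|
  + #|[set bc : 'I_(j + n) * 'I_(alpha + j + n) |
      [exists a, [&& f bc.1 == Some a, top_isolated f bc.2 & (bc.2 < a)%N]]]|
  + #|[set bd : 'I_(j + n) * 'I_(j + n) |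
      [&& f bd.1 != None, f bd.2 == None & (bd.2 < bd.1)%N]]|.

(* Main.v *)
Set Warnings "-notation-overridden,-ambiguous-paths".
Require Import Defs.
From HB Require Import structures.
From mathcomp Require Import all_boot all_order all_algebra ring zify.
Import Order.TTheory GRing.Theory Num.Theory.
Local Open Scope ring_scope.


Section Alg.
Variables (R : realFieldType) (q : R).
Hypothesis q0 : 0 < q.
Hypothesis q1 : q < 1.

Lemma q1n0 : 1 - q != 0.
Proof. by rewrite subr_eq0 eq_sym lt_eqF. Qed.

Lemma qint_neq0 m : (0 < m)%N -> qint q m != 0.
Proof.
move=> m0; rewrite /qint mulf_neq0 ?invr_eq0 ?q1n0 //.
by rewrite subr_eq0 eq_sym lt_eqF // exprn_ilt1 ?ltW // -lt0n.
Qed.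

Lemma qfactS n : qfact q n.+1 = qfact q n * qint q n.+1.
Proof. by rewrite /qfact big_nat_recr. Qed.

Lemma qfact0 : qfact q 0 = 1.
Proof. by rewrite /qfact big_geq. Qed.

Lemma qfact_neq0 n : qfact q n != 0.
Proof.
elim: n => [|n IH]; first by rewrite qfact0 oner_eq0.
by rewrite qfactS mulf_neq0 // qint_neq0.
Qed.

Lemma qbinom_n0 n : qbinom q n 0 = 1.
Proof. by rewrite /qbinom subn0 qfact0 mul1r divff // qfact_neq0. Qed.

Lemma qbinom_0S t : qbinom q 0 t.+1 = 0.
Proof. by []. Qed.

Lemma qsum n : \sum_(i < n) q ^+ i = qint q n.
Proof.
have h := subrX1 q n.
have hq : q - 1 != 0 by rewrite subr_eq0 lt_eqF.
rewrite /qint; apply: (mulfI hq); rewrite -h.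
field; exact: q1n0.
Qed.

Lemma qintS_split n t : (t <= n)%N ->
  qint q n.+1 = qint q t.+1 + q ^+ t.+1 * qint q (n - t).
Proof.
move=> tn; rewrite /qint; have hq := q1n0.
have -> : (n.+1 = t.+1 + (n - t))%N by rewrite addSn subnKC.
rewrite exprD; field; exact hq.
Qed.

Lemma pascal n t : qbinom q n.+1 t.+1 = qbinom q n t + q ^+ t.+1 * qbinom q n t.+1.
Proof.
rewrite /qbinom ltnS.
case: (ltngtP t n) => [tn|nt|->].
- rewrite subSS.
  have e : (n - t = (n - t.+1).+1)%N by rewrite subnSK.
  rewrite e !qfactS -e (qintS_split n t (ltnW tn)).
  have h1 := qfact_neq0 n; have h2 := qfact_neq0 t; have h3 := qfact_neq0 (n - t.+1).
  have h4 : qint q t.+1 != 0 by apply: qint_neq0.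
  have h5 : qint q (n - t) != 0 by apply: qint_neq0; rewrite subn_gt0.
  rewrite e in h5 *.
  field.
  by rewrite h2 h3 h4 h5.
- by rewrite mulr0 addr0.
- by rewrite !subnn qfact0 mulr0 addr0 !mulr1 !divff // qfact_neq0.
Qed.

Lemma absorb k t : qint q k.+1 * qbinom q k t = qint q t.+1 * qbinom q k.+1 t.+1.
Proof.
rewrite /qbinom ltnS subSS; case: leqP => tk; last by rewrite !mulr0.
rewrite !qfactS.
have h1 := qfact_neq0 k; have h2 := qfact_neq0 t; have h3 := qfact_neq0 (k - t).
have h4 : qint q t.+1 != 0 by apply: qint_neq0.
field. by rewrite h2 h3 h4.
Qed.

End Alg.

Lemma recur (R : realFieldType) (q : R) (q0 : 0 < q) (q1 : q < 1) k n t :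
  qbinom q k t * qbinom q n.+1 t * qfact q t =
  q ^+ t * (qbinom q k t * qbinom q n t * qfact q t) +
  (if t is t'.+1 then qint q k * (qbinom q k.-1 t' * qbinom q n t' * qfact q t') else 0).
Proof.
case: t => [|t]; first by rewrite !(@qbinom_n0 _ _ q0 q1) (@qfact0 _ q) expr0 !mul1r addr0.
case: k => [|k].
  by rewrite qbinom_0S /qint expr0 subrr !mul0r mulr0 addr0.
rewrite /= qfactS (@pascal _ _ q0 q1 n t) (_ : forall x y z : R, qint q k.+1 * (x * y * z) = qint q k.+1 * x * y * z); last by move=> *; ring.
rewrite (@absorb _ _ q0 q1).
ring.
Qed.


Section Comb.
Variables (N P : nat).
Local Notation T := {ffun 'I_P -> option 'I_N}.
Implicit Types (A : {set 'I_N}) (B : {set 'I_P}) (f g : T) (b d : 'I_P) (a c : 'I_N).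

Definition supp (B : {set 'I_P}) (f : T) := [forall b, (b \notin B) ==> (f b == None)].
Definition img (A : {set 'I_N}) (f : T) :=
  [forall b, forall a, (f b == Some a) ==> (a \in A)].
Definition inj (f : T) :=
  [forall b1, forall b2, (f b1 != None) ==> (f b1 == f b2) ==> (b1 == b2)].
Definition valid (A : {set 'I_N}) (B : {set 'I_P}) (f : T) := [&& supp B f, img A f & inj f].
Definition ne (f : T) := (\sum_b (f b != None))%N.
Definition e1 (f : T) b1 b2 : bool :=
  if f b1 is Some a then (if f b2 is Some c then (a < c)%N && (b2 < b1)%N else false)
  else false.
Definition isoT (A : {set 'I_N}) (f : T) c : bool := (c \in A) && [forall b, f b != Some c].
Definition e2 (A : {set 'I_N}) (f : T) b c : bool :=
  if f b is Some a then isoT A f c && (c < a)%N else false.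
Definition e3 (B : {set 'I_P}) (f : T) b d : bool :=
  [&& f b != None, d \in B, f d == None & (d < b)%N].
Definition crG (A : {set 'I_N}) (B : {set 'I_P}) (f : T) :=
  (\sum_b1 \sum_b2 e1 f b1 b2 + \sum_b \sum_c e2 A f b c + \sum_b \sum_d e3 B f b d)%N.
Definition upd (f : T) b0 x : T := [ffun i => if i == b0 then x else f i].
Definition rank (A : {set 'I_N}) (a : 'I_N) := (\sum_c ((c \in A) && (c < a)%N))%N.

Lemma validP (A : {set 'I_N}) (B : {set 'I_P}) (f : T) : reflect
  [/\ (forall b, b \notin B -> f b = None),
      (forall b a, f b = Some a -> a \in A) &
      (forall b1 b2, f b1 != None -> f b1 = f b2 -> b1 = b2)] (valid A B f).
Proof.
apply: (iffP and3P) => [[/forallP h1 /forallP h2 /forallP h3]|[h1 h2 h3]]; split.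
- by move=> b /(implyP (h1 b)) /eqP.
- by move=> b a e; apply: (implyP (forallP (h2 b) a)); rewrite e.
- by move=> b1 b2 n e; apply/eqP; apply: (implyP (implyP (forallP (h3 b1) b2) n)); rewrite e.
- by apply/forallP => b; apply/implyP => /h1 ->.
- by apply/forallP => b; apply/forallP => a; apply/implyP => /eqP /h2.
- apply/forallP => b1; apply/forallP => b2; apply/implyP => n; apply/implyP => /eqP e.
  by rewrite (h3 _ _ n e).
Qed.

Lemma sum_pred1n (I : finType) (y : I) (F : I -> bool) :
  (\sum_x ((x == y) && F x : nat))%N = F y.
Proof.
rewrite (bigD1 y) //= eqxx big1 ?addn0 // => x /negbTE -> //.
Qed.


Lemma cr_none A B f (b0 : 'I_P) : b0 \in B -> (forall b, b \in B -> (b0 <= b)%N) ->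
  valid A (B :\ b0) f -> crG A B f = (crG A (B :\ b0) f + ne f)%N.
Proof.
move=> b0B minB /validP [hs hi hj].
have fb0 : f b0 = None by apply: hs; rewrite !inE eqxx.
have hgt : forall b, f b != None -> (b0 < b)%N.
  move=> b nb; case: (boolP (b \in B :\ b0)) => [|nin]; last by rewrite (hs _ nin) in nb.
  rewrite !inE => /andP[nbb bB]; rewrite ltn_neqAle minB // andbT.
  apply: contra nbb => /eqP e; apply/eqP; apply: val_inj; exact: esym e.
rewrite /crG -[in RHS]addnA; congr (_ + _)%N.
rewrite /ne -big_split; apply: eq_bigr => b _.
rewrite (bigD1 b0) // [in RHS](bigD1 b0) // [X in _ = X]addnC addnA; congr (_ + _)%N.
  rewrite /e3 !inE eqxx b0B fb0 /= andbF addn0.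
  by case: (boolP (f b != None)) => //= nb; rewrite hgt.
by apply: eq_bigr => d /andP[_ db0]; rewrite /e3 !inE db0.
Qed.

Lemma cr_some A B g (b0 : 'I_P) a : a \in A -> b0 \in B ->
  (forall b, b \in B -> (b0 <= b)%N) -> valid (A :\ a) (B :\ b0) g ->
  crG A B (upd g b0 (Some a)) = (crG (A :\ a) (B :\ b0) g + rank A a)%N.
Proof.
move=> aA b0B minB /validP [hs hi hj].
set f := upd g b0 (Some a).
have fE : forall b, f b = if b == b0 then Some a else g b by move=> b; rewrite /f /upd ffunE.
have gb0 : g b0 = None by apply: hs; rewrite !inE eqxx.
have hgt : forall b, g b != None -> (b0 < b)%N.
  move=> b nb; case: (boolP (b \in B :\ b0)) => [|nin]; last by rewrite (hs _ nin) in nb.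
  rewrite !inE => /andP[nbb bB]; rewrite ltn_neqAle minB // andbT.
  apply: contra nbb => /eqP e; apply/eqP; apply: val_inj; exact: esym e.
have hiA : forall b c, g b = Some c -> (c \in A) && (c != a).
  by move=> b c /hi; rewrite !inE andbC.
have isoE : forall c, isoT A f c = isoT (A :\ a) g c.
  move=> c; rewrite /isoT !inE; apply/idP/idP.
  - case/andP=> cA /forallP hc; rewrite cA andbT.
    have := hc b0; rewrite fE eqxx => hca.
    apply/andP; split; first by apply: contra hca => /eqP ->.
    apply/forallP => b; case: (eqVneq b b0) => [->|nb]; first by rewrite gb0.
    by have := hc b; rewrite fE (negbTE nb).
  - case/andP=> /andP[ca cA] /forallP hc; rewrite cA /=.
    apply/forallP => b; rewrite fE; case: (eqVneq b b0) => _; last exact: hc.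
    by apply: contra ca => /eqP [->].
have E1 : (\sum_b1 \sum_b2 e1 f b1 b2 = \sum_b1 \sum_b2 e1 g b1 b2 +
            \sum_b1 (if g b1 is Some a1 then (a1 < a)%N else false))%N.
  rewrite -big_split; apply: eq_bigr => b1 _.
  case: (eqVneq b1 b0) => [->|nb1].
  - have z1 : (\sum_b2 e1 f b0 b2 = 0)%N.
      apply: big1 => b2 _; rewrite /e1 fE eqxx fE; case: (eqVneq b2 b0) => [_|nb2]; first by rewrite ltnn.
      case e: (g b2) => [c|] //; have := hgt b2; rewrite e => /(_ isT) h; by rewrite [(b2 < b0)%N]ltnNge (ltnW h) andbF.
    have z2 : (\sum_b2 e1 g b0 b2 = 0)%N by apply: big1 => b2 _; rewrite /e1 gb0.
    by rewrite gb0 z1 z2.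
  rewrite (bigD1 b0) // [X in _ = (X + _)%N](bigD1 b0) //.
  have -> : (\sum_(i | true && (i != b0)) e1 f b1 i = \sum_(i | true && (i != b0)) e1 g b1 i)%N.
    by apply: eq_bigr => b2 /andP[_ nb2]; rewrite /e1 !fE (negbTE nb1) (negbTE nb2).
  have -> : (e1 g b1 b0 : nat) = 0%N by rewrite /e1 gb0; case: (g b1).
  have -> : e1 f b1 b0 = (if g b1 is Some a1 then (a1 < a)%N else false).
    rewrite /e1 !fE (negbTE nb1) eqxx; case e: (g b1) => [a1|] //=.
    by rewrite hgt ?andbT // e.
  set S := bigop.bigop _ _ _; simpl; case: (g b1) => [x|] /=; lia.
have E2 : (\sum_b \sum_c e2 A f b c = \sum_b \sum_c e2 (A :\ a) g b c +
            \sum_c (isoT (A :\ a) g c && (c < a)%N))%N.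
  rewrite (bigD1 b0) // [in RHS](bigD1 b0) //.
  rewrite [X in (X + _ + _)%N]big1 ?add0n; last by move=> c _; rewrite /e2 gb0.
  rewrite addnC; congr (_ + _)%N.
    by apply: eq_bigr => c _; rewrite /e2 fE eqxx isoE.
  apply: eq_bigr => b /andP[_ nb]; apply: eq_bigr => c _.
  by rewrite /e2 fE (negbTE nb) isoE.
have E3 : (\sum_b \sum_d e3 B f b d = \sum_b \sum_d e3 (B :\ b0) g b d)%N.
  apply: eq_bigr => b _; apply: eq_bigr => d _.
  rewrite /e3 !fE !inE; case: (eqVneq b b0) => [->|nb].
    rewrite gb0 /=; case dB: (d \in B) => //=.
    by rewrite ltnNge minB // andbF.
  case: (eqVneq d b0) => [->|nd] /=; first by rewrite !andbF.
  done.
have E4 : (\sum_b (if g b is Some a1 then (a1 < a)%N else false : nat) =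
           \sum_c (~~ [forall b, g b != Some c] && (c < a)%N))%N.
  transitivity (\sum_b \sum_c ((g b == Some c) && (c < a)%N : nat))%N.
    apply: eq_bigr => b _; case e: (g b) => [a1|]; last by rewrite big1.
    rewrite -(@sum_pred1n _ a1 (fun c => (c < a)%N)); apply: eq_bigr => c _.
    by rewrite /= eq_sym.
  rewrite exchange_big; apply: eq_bigr => c _.
  case: (boolP [forall b, g b != Some c]) => [/forallP hc|/forallPn [b1]].
    by rewrite big1 // => b _; rewrite (negbTE (hc b)).
  rewrite negbK => /eqP e1.
  rewrite (bigD1 b1) // e1 eqxx big1; first by case: (c < a)%N.
  move=> b /andP[_ nb].
  case: eqP => // e; exfalso; move/eqP: nb; apply; apply: hj; by rewrite ?e ?e1.
have E5 : (\sum_c (~~ [forall b, g b != Some c] && (c < a)%N) +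
           \sum_c (isoT (A :\ a) g c && (c < a)%N) = rank A a)%N.
  rewrite /rank -big_split; apply: eq_bigr => c _.
  rewrite /isoT !inE; case: (boolP [forall b, g b != Some c]) => [_|/forallPn [b1]] /=.
    rewrite andbT; case: (ltnP c a) => ca; rewrite ?andbF //= ?andbT.
    by rewrite add0n (_ : c != a) //; apply: contraTneq ca => ->; rewrite ltnn.
  rewrite negbK => /eqP /hiA /andP[cA ca]; rewrite cA ca /=.
  by case: (c < a)%N.
rewrite /crG E1 E2 E3 E4 -E5; lia.
Qed.


Lemma valid_none A B f (b0 : 'I_P) : b0 \in B ->
  (valid A B f && (f b0 == None)) = valid A (B :\ b0) f.
Proof.
move=> b0B; apply/idP/idP.
- case/andP => /validP [hs hi hj] /eqP fb0; apply/validP; split => //.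
  move=> b; rewrite !inE negb_and negbK => /orP [/eqP ->|]; [exact: fb0| exact: hs].
- case/validP => hs hi hj.
  have fb0 : f b0 = None by apply: hs; rewrite !inE eqxx.
  rewrite fb0 eqxx andbT; apply/validP; split => // b bB; apply: hs.
  by rewrite !inE (negbTE bB) andbF.
Qed.

Lemma valid_some A B g (b0 : 'I_P) a : a \in A -> b0 \in B ->
  (valid A B (upd g b0 (Some a)) && (g b0 == None)) = valid (A :\ a) (B :\ b0) g.
Proof.
move=> aA b0B.
have fE : forall b, upd g b0 (Some a) b = if b == b0 then Some a else g b.
  by move=> b; rewrite /upd ffunE.
apply/idP/idP.
- case/andP => /validP [hs hi hj] /eqP gb0.
  apply/validP; split.
  + move=> b; rewrite !inE negb_and negbK => /orP [/eqP ->//|nB].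
    have := hs b nB; rewrite fE; case: (eqVneq b b0) => [e|_ h //].
    by rewrite e b0B in nB.
  + move=> b c e.
    have nb : b != b0 by apply/eqP => eb; rewrite eb gb0 in e.
    have fe : upd g b0 (Some a) b = Some c by rewrite fE (negbTE nb).
    rewrite !inE (hi _ _ fe) andbT; apply/eqP => ca; subst c.
    move/eqP: nb; apply; apply: hj; first by rewrite fe.
    by rewrite fe fE eqxx.
  + move=> b1 b2 n e.
    have n1 : b1 != b0 by apply/eqP => eb; rewrite eb gb0 in n.
    have n2 : b2 != b0 by apply/eqP => eb; rewrite e eb gb0 in n.
    by apply: hj; rewrite !fE (negbTE n1) ?(negbTE n2).
- case/validP => hs hi hj.
  have gb0 : g b0 = None by apply: hs; rewrite !inE eqxx.
  rewrite gb0 eqxx andbT; apply/validP; split.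
  + move=> b nB; rewrite fE.
    have nb : b != b0 by apply/eqP => eb; rewrite eb b0B in nB.
    by rewrite (negbTE nb); apply: hs; rewrite !inE (negbTE nB) andbF.
  + move=> b c; rewrite fE; case: eqVneq => _; first by case=> <-.
    by move/hi; rewrite !inE => /andP[].
  + move=> b1 b2; rewrite !fE; case: (eqVneq b1 b0) => [->|n1]; case: (eqVneq b2 b0) => [->|n2] //.
    * by move=> _ e; have := hi _ _ (esym e); rewrite !inE eqxx.
    * by move=> _ e; have := hi _ _ e; rewrite !inE eqxx.
    * exact: hj.
Qed.

Lemma ne_upd g (b0 : 'I_P) x : g b0 = None -> ne (upd g b0 (Some x)) = (ne g).+1.
Proof.
move=> gb0; rewrite /ne (bigD1 b0) // [in RHS](bigD1 b0) // !ffunE eqxx gb0.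
have -> : (\sum_(i | true && (i != b0)) (upd g b0 (Some x) i != None) =
           \sum_(i | true && (i != b0)) (g i != None))%N.
  by apply: eq_bigr => b /andP[_ nb]; rewrite ffunE (negbTE nb).
by [].
Qed.

Lemma upd_back g (b0 : 'I_P) x : (upd (upd g b0 x) b0 None == g) = (g b0 == None).
Proof.
apply/eqP/eqP => [<-|gb0]; first by rewrite ffunE eqxx.
apply/ffunP => b; rewrite !ffunE; case: eqVneq => [->|] //.
Qed.


Variables (R : realFieldType) (q : R).

Definition S A B t := \sum_(f : T | valid A B f && (ne f == t)) q ^+ crG A B f.

Lemma S_step A B (b0 : 'I_P) t : b0 \in B -> (forall b, b \in B -> (b0 <= b)%N) ->
  S A B t = q ^+ t * S A (B :\ b0) t +
    \sum_(a in A) q ^+ rank A a * (if t is t'.+1 then S (A :\ a) (B :\ b0) t' else 0).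
Proof.
move=> b0B minB.
rewrite /S (partition_big (fun f : T => f b0) predT) //.
rewrite (bigD1 None) //; congr (_ + _).
  rewrite big_distrr; apply: eq_big => f.
    by rewrite -andbA (andbC (ne f == t)) andbA valid_none.
  move=> /andP[/andP[hv /eqP ht] /eqP fb0].
  have hv' : valid A (B :\ b0) f by rewrite -valid_none // hv fb0 eqxx.
  by rewrite (@cr_none A B f b0 b0B minB hv') exprD ht mulrC.
rewrite (reindex_omap Some id); last by case.
rewrite [RHS]big_mkcond; apply: eq_big => [a|a _]; first by rewrite /= eqxx.
case aA: (a \in A); last first.
  rewrite big_pred0 // => f; apply/negbTE; apply/negP.
  by move=> /andP[/andP[/validP[_ hi _] _] /eqP e]; rewrite (hi _ _ e) in aA.
rewrite (reindex_onto (fun g : T => upd g b0 (Some a)) (fun f : T => upd f b0 None)); last first.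
  move=> f /andP[_ /eqP e]; apply/ffunP => b; rewrite !ffunE.
  by case: eqVneq => [->|].
case: t => [|t'].
  rewrite mulr0; apply: big_pred0 => g; apply/negbTE; apply/negP.
  move=> /andP[/andP[/andP[_ /eqP hn] _]]; rewrite upd_back => /eqP gb0.
  by rewrite ne_upd in hn.
rewrite big_distrr; apply: eq_big => g.
  rewrite upd_back ffunE eqxx eqxx andbT.
  case: (boolP (g b0 == None)) => gb0.
    by rewrite ne_upd ?(eqP gb0) // eqSS -(@valid_some A B g b0 a aA b0B) gb0 !andbT.
  rewrite andbF; apply/esym/negbTE; apply/negP => /andP[/validP[hs _ _] _].
  by move: gb0; rewrite hs // !inE eqxx.
move=> /andP[/andP[/andP[hv _] _]]; rewrite upd_back => gb0.
have hv' : valid (A :\ a) (B :\ b0) g by rewrite -(@valid_some A B g b0 a aA b0B) hv gb0.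
by rewrite (@cr_some A B g b0 a aA b0B minB hv') exprD mulrC.
Qed.

End Comb.


Lemma rank_sum (R : realFieldType) (q : R) N n (A : {set 'I_N}) :
  #|A| = n -> \sum_(a in A) q ^+ rank N A a = \sum_(i < n) q ^+ i.
Proof.
elim: n A => [|n IH] A cA.
  by rewrite big_ord0; move/cards0_eq: cA => ->; rewrite big_set0.
have /card_gt0P [a0 a0A] : (0 < #|A|)%N by rewrite cA.
case: (arg_maxnP (fun i : 'I_N => nat_of_ord i) a0A) => m mA maxm.
have {}mA : m \in A := mA.
have {}maxm : forall j, j \in A -> (j <= m)%N := maxm.
have cAm : #|A :\ m| = n by have := cA; rewrite (cardsD1 m A) mA add1n => -[].
rewrite (big_setD1 m mA) big_ord_recr /= addrC; congr (_ + _).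
  rewrite -(IH _ cAm); apply: eq_bigr => a; rewrite !inE => /andP[am aA].
  congr (_ ^+ _); rewrite /rank; apply: eq_bigr => c _; rewrite !inE.
  case: (eqVneq c m) => [->|cm] /=; last by [].
  by rewrite mA /= ltnNge maxm.
congr (_ ^+ _); rewrite /rank -cAm -sum1_card [RHS]big_mkcond; apply: eq_bigr => c _.
rewrite !inE; case: (eqVneq c m) => [->|cm] /=; first by rewrite ltnn andbF.
case cA': (c \in A) => //=.
have := maxm c cA'; rewrite leq_eqVlt => /orP [/eqP e|-> //].
by move: cm; rewrite (_ : c = m) ?eqxx //; apply: val_inj.
Qed.

Lemma S_empty (R : realFieldType) (q : R) N P (A : {set 'I_N}) t :
  S N P R q A set0 t = if t == 0%N then 1 else 0.
Proof.
pose f0 : {ffun 'I_P -> option 'I_N} := [ffun _ => None].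
have vE : forall f, @valid N P A set0 f = (f == f0).
  move=> f; apply/idP/eqP => [/validP [hs _ _]|->].
    by apply/ffunP => b; rewrite ffunE hs // inE.
  by apply/validP; split => [b _|b a|b1 b2]; rewrite ffunE //; rewrite eqxx.
have ne0 : @ne N P f0 = 0%N by rewrite /ne big1 // => b _; rewrite ffunE.
rewrite /S; case: t => [|t].
  rewrite (big_pred1 f0) => [|f]; last first.
    rewrite vE; case: (eqVneq f f0) => [->|nf]; rewrite /=; last by rewrite (negbTE nf).
    by apply/eqP/eqP => // _; exact: ne0.
  rewrite /crG !big1 // => b _; apply: big1 => c _; by rewrite /e1 /e2 /e3 ffunE.
rewrite big_pred0 // => f; rewrite vE; case: (eqVneq f f0) => [->|//]; by rewrite ne0.
Qed.

Lemma S_closed (R : realFieldType) (q : R) (q0 : 0 < q) (q1 : q < 1) N P n :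
  forall (A : {set 'I_N}) (B : {set 'I_P}) t, #|B| = n ->
  S N P R q A B t = qbinom q #|A| t * qbinom q n t * qfact q t.
Proof.
elim: n => [|n IH] A B t cB.
  move/cards0_eq: cB => ->; rewrite S_empty.
  case: t => [|t]; first by rewrite !(@qbinom_n0 _ _ q0 q1) (@qfact0 _ q) !mulr1.
  by rewrite qbinom_0S mulr0 mul0r.
have /card_gt0P [b1 b1B] : (0 < #|B|)%N by rewrite cB.
case: (arg_minnP (fun i : 'I_P => nat_of_ord i) b1B) => b0 b0B minb.
have {}b0B : b0 \in B := b0B.
have {}minb : forall b, b \in B -> (b0 <= b)%N := minb.
have cBb : #|B :\ b0| = n by have := cB; rewrite (cardsD1 b0 B) b0B add1n => -[].
rewrite (@S_step N P R q A B b0 t b0B minb) (IH A (B :\ b0) t cBb).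
have -> : \sum_(a in A) q ^+ rank N A a *
     (if t is t'.+1 then S N P R q (A :\ a) (B :\ b0) t' else 0) =
   (if t is t'.+1 then qint q #|A| * (qbinom q #|A|.-1 t' * qbinom q n t' * qfact q t')
    else 0).
  case: t => [|t]; first by rewrite big1 // => a _; rewrite mulr0.
  rewrite -(@qsum _ _ q1 #|A|) -(@rank_sum _ q _ _ A (erefl _)) big_distrl.
  apply: eq_bigr => a aA; rewrite (IH (A :\ a) (B :\ b0) t cBb).
  by rewrite (cardsD1 a A) aA add1n.
exact: esym (@recur _ _ q0 q1 #|A| n t).
Qed.

Lemma card_sum (I : finType) (p : pred I) : #|[set x | p x]| = (\sum_x (p x : nat))%N.
Proof.
rewrite -sum1_card big_mkcond; apply: eq_bigr => x _; rewrite inE; by case: (p x).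
Qed.

Lemma card_sum2 (I J : finType) (p : pred (I * J)) :
  #|[set x | p x]| = (\sum_i \sum_j (p (i, j) : nat))%N.
Proof.
rewrite card_sum (pair_bigA _ (fun i j => (p (i, j) : nat))).
by apply: eq_bigr => -[i j].
Qed.

Theorem lemma2p5 (R : realFieldType) (q : R) (alpha p t : nat) :
  0 < q -> q < 1 -> (t <= p)%N ->
  \sum_(M : matching alpha p 0 | in_M M && (nedges M == t)) q ^+ cr M
  = qbinom q (p + alpha) t * qbinom q p t * qfact q t.
Proof.
move=> q0 q1 _.
transitivity (S (alpha + 0 + p) (0 + p) R q setT setT t); last first.
  rewrite (@S_closed R q q0 q1 _ _ (0 + p)%N); last by rewrite cardsT card_ord.
  by rewrite cardsT card_ord addn0 add0n addnC.
apply: eq_big => M.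
  rewrite /in_M /valid /nedges card_sum.
  have -> : no_neg_edge M by apply/forallP => b; apply/forallP => a; apply/implyP.
  have -> : @supp _ _ setT M by apply/forallP => b; rewrite in_setT.
  have -> : @img _ _ setT M by apply/forallP => b; apply/forallP => a; rewrite in_setT implybT.
  by rewrite andbT.
move=> _; congr (_ ^+ _); rewrite /cr /crG !card_sum2.
congr (_ + _ + _)%N.
- apply: eq_bigr => b1 _; apply: eq_bigr => b2 _; congr (nat_of_bool _).
  rewrite /e1 /=; case e1: (M b1) => [a|]; case e2: (M b2) => [c|];
    try by (apply/negbTE/negP => /existsP[x /existsP[y /and4P[h1 h2 _ _]]];
            first [discriminate h1 | discriminate h2]).
  apply/idP/idP => [/existsP[a' /existsP[c' /and4P[/eqP[<-] /eqP[<-] h1 h2]]]|/andP[h1 h2]].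
    by rewrite h1 h2.
  by apply/existsP; exists a; apply/existsP; exists c; rewrite !eqxx h1 h2.
- apply: eq_bigr => b _; apply: eq_bigr => c _; congr (nat_of_bool _).
  rewrite /e2 /isoT /top_isolated /= in_setT /=; case e: (M b) => [a|].
    apply/idP/idP => [/existsP[a' /and3P[/eqP[<-] h1 h2]]|/andP[h1 h2]].
      by rewrite h1 h2.
    by apply/existsP; exists a; rewrite eqxx h1 h2.
  by apply/negbTE/negP => /existsP[x /and3P[h1 _ _]]; discriminate h1.
- apply: eq_bigr => b _; apply: eq_bigr => d _.
  by rewrite /e3 /= in_setT.
Qed.
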